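(* Let $V$ be a commutative unital quantale whose underlying lattice is a frame. The category $\mathsf{VGrp}$ is a regular category in the sense of Barr. Moreover, when $V$ is integral (i.e. $k=\top$), $\mathsf{VGrp}$ is normal: it is pointed and every regular epimorphism is a cokernel.
   Context: A commutative unital quantale $V$ is a complete lattice with a commutative associative operation $\otimes$ with unit $k$ preserving arbitrary joins in each variable; standing assumption: as a lattice $V$ is a frame (binary meets distribute over arbitrary joins). A $V$-category $(X,a)$: $a\colon X\times X\to V$ with $k\le a(x,x)$ and $a(x,x')\otimes a(x',x'')\le a(x,x'')$. A $V$-group $(X,a,+)$ is a $V$-category with a group structure (additive, not necessarily abelian) such that $a(x_1,x_2)\otimes a(x_1',x_2')\le a(x_1+x_1',x_2+x_2')$; $V$-homomorphisms are group homomorphisms $f$ with $a(x,x')\le b(f(x),f(x'))$; category $\mathsf{VGrp}$. A regular category (Barr) is a finitely complete category with coequalizers of kernel pairs in which regular epimorphisms are stable under pullback. *)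

(* Defs.v *)
From Stdlib Require Import Setoid.

Set Implicit Arguments.
Unset Strict Implicit.

Record quantale := Quantale {
  qcar :> Type;
  qle : qcar -> qcar -> Prop;
  qsup : (qcar -> Prop) -> qcar;
  qtensor : qcar -> qcar -> qcar;
  qk : qcar;
  qle_refl : forall x, qle x x;
  qle_trans : forall x y z, qle x y -> qle y z -> qle x z;
  qle_antisym : forall x y, qle x y -> qle y x -> x = y;
  qsup_ub : forall (S : qcar -> Prop) x, S x -> qle x (qsup S);
  qsup_least : forall (S : qcar -> Prop) y,
      (forall x, S x -> qle x y) -> qle (qsup S) y;
  qtensorC : forall x y, qtensor x y = qtensor y x;
  qtensorA : forall x y z, qtensor x (qtensor y z) = qtensor (qtensor x y) z;
  qtensor1l : forall x, qtensor qk x = x;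
  qtensor1r : forall x, qtensor x qk = x;
  qtensor_supl : forall (S : qcar -> Prop) a,
      qtensor (qsup S) a = qsup (fun y => exists s, S s /\ y = qtensor s a);
  qtensor_supr : forall a (S : qcar -> Prop),
      qtensor a (qsup S) = qsup (fun y => exists s, S s /\ y = qtensor a s);
  (* frame law: binary meets distribute over arbitrary joins; the binary meet
     is the join of all common lower bounds *)
  qframe : forall a (S : qcar -> Prop),
      qsup (fun c => qle c a /\ qle c (qsup S)) =
      qsup (fun y => exists s, S s /\
                 y = qsup (fun c => qle c a /\ qle c s))
}.

Definition qmeet (V : quantale) (a b : V) : V :=
  qsup (fun c => qle c a /\ qle c b).
Definition qtop (V : quantale) : V := qsup (fun _ => True).

Definition integral (V : quantale) : Prop := qk V = qtop V.

Record vgroup (V : quantale) := VGroup {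
  gcar :> Type;
  gdist : gcar -> gcar -> V;
  gadd : gcar -> gcar -> gcar;
  gzero : gcar;
  gopp : gcar -> gcar;
  gaddA : forall x y z, gadd x (gadd y z) = gadd (gadd x y) z;
  gadd0l : forall x, gadd gzero x = x;
  gadd0r : forall x, gadd x gzero = x;
  gaddNl : forall x, gadd (gopp x) x = gzero;
  gaddNr : forall x, gadd x (gopp x) = gzero;
  gdist_refl : forall x, qle (qk V) (gdist x x);
  gdist_trans : forall x y z,
      qle (qtensor (gdist x y) (gdist y z)) (gdist x z);
  gdist_add : forall x1 x2 y1 y2,
      qle (qtensor (gdist x1 x2) (gdist y1 y2))
          (gdist (gadd x1 y1) (gadd x2 y2))
}.

Record vhom (V : quantale) (X Y : vgroup V) := VHom {
  hfun :> X -> Y;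
  hfun_add : forall x y, hfun (gadd x y) = gadd (hfun x) (hfun y);
  hfun_dist : forall x y, qle (gdist x y) (gdist (hfun x) (hfun y))
}.

Record category := Category {
  Obj : Type;
  Hom : Obj -> Obj -> Type;
  heq : forall A B, Hom A B -> Hom A B -> Prop;
  cid : forall A, Hom A A;
  comp : forall A B C, Hom B C -> Hom A B -> Hom A C;  (* comp g f = g o f *)
  heq_refl : forall A B (f : Hom A B), heq f f;
  heq_sym : forall A B (f g : Hom A B), heq f g -> heq g f;
  heq_trans : forall A B (f g h : Hom A B), heq f g -> heq g h -> heq f h;
  comp_heq : forall A B C (g g' : Hom B C) (f f' : Hom A B),
      heq g g' -> heq f f' -> heq (comp g f) (comp g' f');
  compA : forall A B C D (h : Hom C D) (g : Hom B C) (f : Hom A B),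
      heq (comp h (comp g f)) (comp (comp h g) f);
  comp1l : forall A B (f : Hom A B), heq (comp (cid B) f) f;
  comp1r : forall A B (f : Hom A B), heq (comp f (cid A)) f
}.

Arguments heq {c A B}.
Arguments cid {c}.
Arguments comp {c A B C}.

Section CatDefs.
Variable C : category.

Definition is_terminal (T : Obj C) : Prop :=
  forall X : Obj C, exists h : Hom X T, forall h' : Hom X T, heq h' h.

Definition is_initial (I : Obj C) : Prop :=
  forall X : Obj C, exists h : Hom I X, forall h' : Hom I X, heq h' h.

Definition is_zero_object (Z : Obj C) : Prop := is_initial Z /\ is_terminal Z.

Definition is_product (A B P : Obj C) (p1 : Hom P A) (p2 : Hom P B) : Prop :=
  forall (Z : Obj C) (u : Hom Z A) (v : Hom Z B),
    exists w : Hom Z P, heq (comp p1 w) u /\ heq (comp p2 w) v /\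
      forall w' : Hom Z P, heq (comp p1 w') u -> heq (comp p2 w') v -> heq w' w.

Definition is_equalizer (A B E : Obj C) (f g : Hom A B) (e : Hom E A) : Prop :=
  heq (comp f e) (comp g e) /\
  forall (Z : Obj C) (u : Hom Z A), heq (comp f u) (comp g u) ->
    exists w : Hom Z E, heq (comp e w) u /\
      forall w' : Hom Z E, heq (comp e w') u -> heq w' w.

Definition is_pullback (A B X P : Obj C) (f : Hom A X) (g : Hom B X)
    (p1 : Hom P A) (p2 : Hom P B) : Prop :=
  heq (comp f p1) (comp g p2) /\
  forall (Z : Obj C) (u : Hom Z A) (v : Hom Z B), heq (comp f u) (comp g v) ->
    exists w : Hom Z P, heq (comp p1 w) u /\ heq (comp p2 w) v /\
      forall w' : Hom Z P, heq (comp p1 w') u -> heq (comp p2 w') v -> heq w' w.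

Definition is_coequalizer (A B Q : Obj C) (f g : Hom A B) (q : Hom B Q) : Prop :=
  heq (comp q f) (comp q g) /\
  forall (Z : Obj C) (u : Hom B Z), heq (comp u f) (comp u g) ->
    exists w : Hom Q Z, heq (comp w q) u /\
      forall w' : Hom Q Z, heq (comp w' q) u -> heq w' w.

Definition has_terminal : Prop := exists T, is_terminal T.
Definition has_binary_products : Prop :=
  forall A B : Obj C, exists P (p1 : Hom P A) (p2 : Hom P B), is_product p1 p2.
Definition has_equalizers : Prop :=
  forall (A B : Obj C) (f g : Hom A B), exists E (e : Hom E A), is_equalizer f g e.
Definition has_pullbacks : Prop :=
  forall (A B X : Obj C) (f : Hom A X) (g : Hom B X),
    exists P (p1 : Hom P A) (p2 : Hom P B), is_pullback f g p1 p2.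

(* finite completeness: terminal object, binary products and equalizers
   (hence all finite limits); pullbacks are listed explicitly as well *)
Definition finitely_complete : Prop :=
  has_terminal /\ has_binary_products /\ has_equalizers /\ has_pullbacks.

Definition regular_epi (B Q : Obj C) (e : Hom B Q) : Prop :=
  exists (A : Obj C) (f g : Hom A B), is_coequalizer f g e.

Definition kernel_pairs_have_coequalizers : Prop :=
  forall (A B P : Obj C) (f : Hom A B) (p1 p2 : Hom P A),
    is_pullback f f p1 p2 -> exists Q (q : Hom A Q), is_coequalizer p1 p2 q.

Definition regular_epis_pullback_stable : Prop :=
  forall (A B X P : Obj C) (g : Hom A X) (e : Hom B X)
         (p1 : Hom P A) (p2 : Hom P B),
    regular_epi e -> is_pullback g e p1 p2 -> regular_epi p1.

Definition regular : Prop :=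
  finitely_complete /\ kernel_pairs_have_coequalizers /\
  regular_epis_pullback_stable.

Definition pointed : Prop := exists Z, is_zero_object Z.

(* e : B -> Q is a cokernel (w.r.t. the zero object Z): it is the coequalizer
   of some f : A -> B and the zero morphism A -> Z -> B *)
Definition is_cokernel (Z : Obj C) (B Q : Obj C) (e : Hom B Q) : Prop :=
  exists (A : Obj C) (f : Hom A B) (z1 : Hom A Z) (z2 : Hom Z B),
    is_coequalizer f (comp z2 z1) e.

Definition normal : Prop :=
  exists Z, is_zero_object Z /\
    forall (B Q : Obj C) (e : Hom B Q), regular_epi e -> is_cokernel Z e.

End CatDefs.

Section VGrpCat.
Variable V : quantale.

Definition vheq (X Y : vgroup V) (f g : vhom X Y) : Prop := forall x, f x = g x.

Definition vid (X : vgroup V) : vhom X X.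
Proof.
refine (@VHom V X X (fun x => x) _ _); intros; [reflexivity | apply qle_refl].
Defined.

Definition vcomp (X Y Z : vgroup V) (g : vhom Y Z) (f : vhom X Y) : vhom X Z.
Proof.
refine (@VHom V X Z (fun x => g (f x)) _ _); intros.
- rewrite (hfun_add f), (hfun_add g); reflexivity.
- eapply qle_trans; [apply (hfun_dist f) | apply (hfun_dist g)].
Defined.

Definition VGrp : category.
Proof.
refine (@Category (vgroup V) (@vhom V) vheq vid vcomp _ _ _ _ _ _ _);
  unfold vheq; simpl; intros.
- reflexivity.
- symmetry; auto.
- etransitivity; eauto.
- rewrite H0, H; reflexivity.
- reflexivity.
- reflexivity.
- reflexivity.
Defined.

End VGrpCat.

(* Main.v *)
Require Import Defs.
From Stdlib Require Import ProofIrrelevance ClassicalEpsilon.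
Local Notation gz := (@gzero _ _).
Set Implicit Arguments.
Unset Strict Implicit.

Section Q.
Variable V : quantale.

Lemma tensor_monol (a b c : V) : qle a b -> qle (qtensor a c) (qtensor b c).
Proof.
  intros H.
  assert (E : b = qsup (fun x => x = a \/ x = b)).
  { apply qle_antisym. apply qsup_ub; auto.
    apply qsup_least; intros x [-> | ->]; auto using qle_refl. }
  rewrite E, qtensor_supl. apply qsup_ub. exists a; split; auto.
Qed.

Lemma tensor_mono (a a' b b' : V) : qle a a' -> qle b b' ->
  qle (qtensor a b) (qtensor a' b').
Proof.
  intros H1 H2. eapply qle_trans; [apply tensor_monol; exact H1|].
  rewrite (qtensorC a' b), (qtensorC a' b'). apply tensor_monol; exact H2.
Qed.

Lemma meet_l (a b : V) : qle (qmeet a b) a.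
Proof. apply qsup_least; intros c [H _]; exact H. Qed.
Lemma meet_r (a b : V) : qle (qmeet a b) b.
Proof. apply qsup_least; intros c [_ H]; exact H. Qed.
Lemma meet_glb (a b c : V) : qle c a -> qle c b -> qle c (qmeet a b).
Proof. intros; apply qsup_ub; auto. Qed.
Lemma top_ge (x : V) : qle x (qtop V).
Proof. apply qsup_ub; exact I. Qed.

Lemma meet_sup_le (a : V) S y : (forall s, S s -> qle (qmeet a s) y) ->
  qle (qmeet a (qsup S)) y.
Proof.
  intros H. unfold qmeet. rewrite qframe. apply qsup_least.
  intros x [s [Hs ->]]. apply H; auto.
Qed.

Lemma sup_tensor_le (S T : V -> Prop) y :
  (forall s t, S s -> T t -> qle (qtensor s t) y) ->
  qle (qtensor (qsup S) (qsup T)) y.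
Proof.
  intros H. rewrite qtensor_supl. apply qsup_least.
  intros x [s [Hs ->]]. rewrite qtensor_supr. apply qsup_least.
  intros x [t [Ht ->]]. auto.
Qed.

Lemma add_cancel_l (X : vgroup V) (a b c : X) : gadd a b = gadd a c -> b = c.
Proof.
  intros H. rewrite <- (gadd0l b), <- (gadd0l c), <- (gaddNl a), <- !gaddA, H.
  reflexivity.
Qed.

Lemma sub_eq0 (X : vgroup V) (a c : X) : gadd a (gopp c) = gz -> a = c.
Proof.
  intros H. rewrite <- (gadd0r a), <- (gaddNl c), gaddA, H, gadd0l. reflexivity.
Qed.

Lemma hom_zero (X Y : vgroup V) (f : vhom X Y) : f gz = gz.
Proof.
  apply (@add_cancel_l _ (f gz)).
  rewrite <- hfun_add, gadd0l, gadd0r. reflexivity.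
Qed.

Lemma hom_opp (X Y : vgroup V) (f : vhom X Y) x : f (gopp x) = gopp (f x).
Proof.
  apply (@add_cancel_l _ (f x)). rewrite <- hfun_add, !gaddNr, hom_zero.
  reflexivity.
Qed.

Lemma dist_transl (X : vgroup V) (x y t : X) :
  qle (gdist x y) (gdist (gadd x t) (gadd y t)).
Proof.
  eapply qle_trans; [|apply gdist_add].
  rewrite <- (qtensor1r (gdist x y)) at 1.
  apply tensor_mono; [apply qle_refl | apply gdist_refl].
Qed.

Lemma sigP_eq {A} {P : A -> Prop} (a b : {x | P x}) :
  proj1_sig a = proj1_sig b -> a = b.
Proof.
  destruct a, b; simpl; intros ->; f_equal; apply proof_irrelevance.
Qed.

Definition vsubd (X : vgroup V) (P : X -> Prop) (H0 : P gz)
  (Hadd : forall x y, P x -> P y -> P (gadd x y))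
  (Hopp : forall x, P x -> P (gopp x))
  (d : {x | P x} -> {x | P x} -> V)
  (drefl : forall x, qle (qk V) (d x x))
  (dtrans : forall x y z, qle (qtensor (d x y) (d y z)) (d x z))
  (dadd : forall x1 x2 y1 y2, qle (qtensor (d x1 x2) (d y1 y2))
      (d (exist _ (gadd (proj1_sig x1) (proj1_sig y1)) (Hadd _ _ (proj2_sig x1) (proj2_sig y1)))
         (exist _ (gadd (proj1_sig x2) (proj1_sig y2)) (Hadd _ _ (proj2_sig x2) (proj2_sig y2)))))
  : vgroup V.
Proof.
  refine (@VGroup V {x : X | P x} d
    (fun a b => exist _ (gadd (proj1_sig a) (proj1_sig b)) (Hadd _ _ (proj2_sig a) (proj2_sig b)))
    (exist _ gz H0)
    (fun a => exist _ (gopp (proj1_sig a)) (Hopp _ (proj2_sig a))) _ _ _ _ _ drefl dtrans dadd);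
  intros; apply sigP_eq; simpl.
  - apply gaddA.
  - apply gadd0l.
  - apply gadd0r.
  - apply gaddNl.
  - apply gaddNr.
Defined.

Definition vsub (X : vgroup V) (P : X -> Prop) (H0 : P gz)
  (Hadd : forall x y, P x -> P y -> P (gadd x y))
  (Hopp : forall x, P x -> P (gopp x)) : vgroup V.
Proof.
  refine (@vsubd X P H0 Hadd Hopp (fun a b => gdist (proj1_sig a) (proj1_sig b)) _ _ _);
  intros; simpl.
  - apply gdist_refl.
  - apply gdist_trans.
  - apply gdist_add.
Defined.

Definition vincl X P H0 Hadd Hopp : vhom (@vsub X P H0 Hadd Hopp) X.
Proof.
  refine (@VHom V (@vsub X P H0 Hadd Hopp) X (fun a => proj1_sig a) _ _); intros; simpl.
  - reflexivity.
  - apply qle_refl.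
Defined.

Definition vcorestr X P H0 Hadd Hopp (Z : vgroup V) (u : vhom Z X)
  (H : forall z, P (u z)) : vhom Z (@vsub X P H0 Hadd Hopp).
Proof.
  refine (@VHom V Z (@vsub X P H0 Hadd Hopp) (fun z => exist _ (u z) (H z)) _ _); intros.
  - apply sigP_eq; simpl. apply hfun_add.
  - simpl. apply hfun_dist.
Defined.

Definition vprod (A B : vgroup V) : vgroup V.
Proof.
  refine (@VGroup V (A * B)
    (fun p q => qmeet (gdist (fst p) (fst q)) (gdist (snd p) (snd q)))
    (fun p q => (gadd (fst p) (fst q), gadd (snd p) (snd q)))
    (gz, gz) (fun p => (gopp (fst p), gopp (snd p))) _ _ _ _ _ _ _ _).
  - intros [] [] []; simpl; f_equal; apply gaddA.
  - intros []; simpl; f_equal; apply gadd0l.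
  - intros []; simpl; f_equal; apply gadd0r.
  - intros []; simpl; f_equal; apply gaddNl.
  - intros []; simpl; f_equal; apply gaddNr.
  - intros []; simpl; apply meet_glb; apply gdist_refl.
  - intros [] [] []; simpl; apply meet_glb;
      (eapply qle_trans; [apply tensor_mono; [apply meet_l|apply meet_l] | apply gdist_trans])
      || (eapply qle_trans; [apply tensor_mono; [apply meet_r|apply meet_r] | apply gdist_trans]).
  - intros [] [] [] []; simpl; apply meet_glb;
      (eapply qle_trans; [apply tensor_mono; [apply meet_l|apply meet_l] | apply gdist_add])
      || (eapply qle_trans; [apply tensor_mono; [apply meet_r|apply meet_r] | apply gdist_add]).
Defined.

Definition vfst A B : vhom (vprod A B) A.
Proof. refine (@VHom V (vprod A B) A (fun p => fst p) _ _); intros; simpl; [reflexivity|apply meet_l]. Defined.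
Definition vsnd A B : vhom (vprod A B) B.
Proof. refine (@VHom V (vprod A B) B (fun p => snd p) _ _); intros; simpl; [reflexivity|apply meet_r]. Defined.
Definition vpair Z A B (u : vhom Z A) (v : vhom Z B) : vhom Z (vprod A B).
Proof.
  refine (@VHom V Z (vprod A B) (fun z => (u z, v z)) _ _); intros; simpl.
  - rewrite !hfun_add; reflexivity.
  - apply meet_glb; apply hfun_dist.
Defined.

Definition vunit : vgroup V.
Proof.
  refine (@VGroup V unit (fun _ _ => qtop V) (fun _ _ => tt) tt (fun _ => tt)
    _ _ _ _ _ _ _ _); intros; try apply top_ge; repeat match goal with u : unit |- _ => destruct u end;
    reflexivity.
Defined.

Definition vterm X : vhom X vunit.
Proof. refine (@VHom V X vunit (fun _ => tt) _ _); intros; simpl; [reflexivity|apply top_ge]. Defined.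

Definition vinit (HI : integral V) X : vhom vunit X.
Proof.
  refine (@VHom V vunit X (fun _ => gz) _ _); intros; simpl.
  - symmetry; apply gadd0l.
  - unfold integral in HI. rewrite <- HI. apply gdist_refl.
Defined.

Section Img.
Variables (A B : vgroup V) (f : vhom A B).

Definition PI (y : B) := exists x, f x = y.
Lemma PI0 : PI gz. Proof. exists gz; apply hom_zero. Qed.
Lemma PIadd x y : PI x -> PI y -> PI (gadd x y).
Proof. intros [a <-] [b <-]; exists (gadd a b); apply hfun_add. Qed.
Lemma PIopp x : PI x -> PI (gopp x).
Proof. intros [a <-]; exists (gopp a); apply hom_opp. Qed.

Definition dimg (a b : {y | PI y}) : V :=
  qsup (fun v => exists x1 x2, f x1 = proj1_sig a /\ f x2 = proj1_sig b /\ v = gdist x1 x2).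

Definition vimg : vgroup V.
Proof.
  refine (@vsubd B PI PI0 PIadd PIopp dimg _ _ _).
  - intros [y [x Hx]]. eapply qle_trans; [apply (gdist_refl x)|].
    apply qsup_ub. exists x, x; auto.
  - intros a b c. apply sup_tensor_le.
    intros s t (x1 & x2 & H1 & H2 & ->) (x2' & x3 & H2' & H3 & ->).
    set (t0 := gadd (gopp x2') x2).
    eapply qle_trans.
    { apply tensor_mono; [apply qle_refl | apply (dist_transl x2' x3 t0)]. }
    replace (gadd x2' t0) with x2 by (unfold t0; rewrite gaddA, gaddNr, gadd0l; reflexivity).
    eapply qle_trans; [apply gdist_trans|].
    apply qsup_ub. exists x1, (gadd x3 t0). split; [exact H1|split; [|reflexivity]].
    unfold t0. rewrite !hfun_add, hom_opp, H3, H2, <- H2', gaddA. 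
    rewrite <- (gaddA (proj1_sig c)), gaddNl, gadd0r. reflexivity.
  - intros a1 a2 b1 b2. apply sup_tensor_le.
    intros s t (x1 & x2 & H1 & H2 & ->) (y1 & y2 & H1' & H2' & ->).
    eapply qle_trans; [apply gdist_add|].
    apply qsup_ub. exists (gadd x1 y1), (gadd x2 y2). simpl.
    rewrite !hfun_add, H1, H2, H1', H2'. auto.
Defined.

Definition vcoim : vhom A vimg.
Proof.
  refine (@VHom V A vimg (fun x => exist PI (f x) (ex_intro _ x eq_refl)) _ _); intros.
  - apply sigP_eq; simpl; apply hfun_add.
  - simpl. unfold dimg. apply qsup_ub. exists x, y; simpl; auto.
Defined.

Definition vimincl : vhom vimg B.
Proof.
  refine (@VHom V vimg B (fun y => proj1_sig y) _ _); intros.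
  - reflexivity.
  - simpl. unfold dimg. apply qsup_least. intros v (x1 & x2 & H1 & H2 & ->).
    rewrite <- H1, <- H2. apply hfun_dist.
Defined.
End Img.

Definition surj (B X : vgroup V) (e : vhom B X) := forall y, exists b, e b = y.
Definition quot (B X : vgroup V) (e : vhom B X) := forall y1 y2,
  qle (gdist y1 y2) (qsup (fun v => exists b1 b2, e b1 = y1 /\ e b2 = y2 /\ v = gdist b1 b2)).

Section Factor.
Variables (B X Z : vgroup V) (e : vhom B X) (Hs : surj e) (Hq : quot e)
  (u : vhom B Z) (Hu : forall b b', e b = e b' -> u b = u b').

Definition pre (y : X) : B := proj1_sig (constructive_indefinite_description _ (Hs y)).
Lemma pre_spec y : e (pre y) = y.
Proof. unfold pre. destruct constructive_indefinite_description; simpl; auto. Qed.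

Definition fmap : vhom X Z.
Proof.
  refine (@VHom V X Z (fun y => u (pre y)) _ _); intros.
  - rewrite <- hfun_add. apply Hu. rewrite hfun_add, !pre_spec. reflexivity.
  - eapply qle_trans; [apply Hq|]. apply qsup_least. intros v (b1 & b2 & H1 & H2 & ->).
    rewrite <- (@Hu b1 (pre x)), <- (@Hu b2 (pre y)); try (rewrite pre_spec; auto).
    apply hfun_dist.
Defined.

Lemma fmap_spec b : fmap (e b) = u b.
Proof. simpl. apply Hu. rewrite pre_spec; reflexivity. Qed.
End Factor.

Lemma coeq_of (K B X : vgroup V) (e : vhom B X) (Hs : surj e) (Hq : quot e)
  (h1 h2 : vhom K B) (Heq : forall k, e (h1 k) = e (h2 k))
  (Hk : forall Z (u : vhom B Z), (forall k, u (h1 k) = u (h2 k)) ->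
        forall b b', e b = e b' -> u b = u b') :
  @is_coequalizer (VGrp V) K B X h1 h2 e.
Proof.
  split.
  - exact Heq.
  - intros Z u Hu. cbv [VGrp heq comp vheq] in Hu; simpl in Hu. exists (fmap Hs Hq (Hk Z u Hu)). split.
    + intro b. apply fmap_spec.
    + intros w' Hw' y. assert (Hw'' : forall b, w' (e b) = u b) by exact Hw'.
      destruct (Hs y) as [b <-].
      rewrite Hw''. symmetry. apply fmap_spec.
Qed.

Lemma regepi_char (A B X : vgroup V) (f g : vhom A B) (e : vhom B X) :
  @is_coequalizer (VGrp V) A B X f g e -> surj e /\ quot e.
Proof.
  intros [Hfg Hu]. cbv [VGrp heq comp vheq] in Hfg; simpl in Hfg.
  destruct (Hu (vimg e) (vcoim e)) as [w [Hw _]].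
  { intro a. apply sigP_eq. simpl. apply Hfg. }
  cbv [VGrp heq comp vheq] in Hw; simpl in Hw.
  destruct (Hu X e Hfg) as [w0 [_ Hu0]].
  assert (Hid : forall y, proj1_sig (w y) = y).
  { intro y. transitivity (w0 y).
    - apply (Hu0 (vcomp (vimincl e) w)). intro b. simpl. rewrite Hw. reflexivity.
    - symmetry. apply (Hu0 (vid X)). intro b. reflexivity. }
  split.
  - intro y. destruct (proj2_sig (w y)) as [b Hb]. exists b. rewrite Hb; apply Hid.
  - intros y1 y2. eapply qle_trans; [apply (hfun_dist w)|].
    simpl. unfold dimg. rewrite !Hid. apply qle_refl.
Qed.

Section PB.
Variables (A B X : vgroup V) (g : vhom A X) (e : vhom B X).
Definition PP (p : vprod A B) := g (fst p) = e (snd p).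
Lemma PP0 : PP gz. Proof. unfold PP; simpl; rewrite !hom_zero; reflexivity. Qed.
Lemma PPadd x y : PP x -> PP y -> PP (gadd x y).
Proof. unfold PP; simpl; intros H1 H2; rewrite !hfun_add, H1, H2; reflexivity. Qed.
Lemma PPopp x : PP x -> PP (gopp x).
Proof. unfold PP; simpl; intros H1; rewrite !hom_opp, H1; reflexivity. Qed.
Definition vpb := vsub PP0 PPadd PPopp.
Definition pb1 : vhom vpb A := vcomp (vfst A B) (vincl _ _ _).
Definition pb2 : vhom vpb B := vcomp (vsnd A B) (vincl _ _ _).

Lemma vpb_is_pullback : @is_pullback (VGrp V) A B X vpb g e pb1 pb2.
Proof.
  split.
  - intros [[a b] H]. exact H.
  - intros Z u v Huv. cbv [VGrp heq comp vheq] in Huv; simpl in Huv.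
    exists (@vcorestr (vprod A B) PP PP0 PPadd PPopp Z (vpair u v) Huv). simpl.
    split; [intro; reflexivity|split; [intro; reflexivity|]].
    intros w' H1 H2 z. cbv [VGrp heq comp vheq] in H1, H2; simpl in H1, H2. apply sigP_eq. simpl.
    rewrite <- H1, <- H2. apply surjective_pairing.
Qed.
End PB.

Lemma pullback_regepi (A B X P : vgroup V) (g : vhom A X) (e : vhom B X)
  (p1 : vhom P A) (p2 : vhom P B) :
  surj e -> quot e -> @is_pullback (VGrp V) A B X P g e p1 p2 -> surj p1 /\ quot p1.
Proof.
  intros Hs Hq [Hc Hu].
  destruct (Hu (vpb g e) (pb1 g e) (pb2 g e) (fun z => proj2_sig z)) as [w [Hw1 [Hw2 _]]].
  cbv [VGrp heq comp vheq] in Hw1, Hw2; simpl in Hw1, Hw2.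
  split.
  - intro a. destruct (Hs (g a)) as [b Hb].
    exists (w (exist _ (a, b) (eq_sym Hb) : vpb g e)). rewrite Hw1. reflexivity.
  - intros a1 a2.
    eapply qle_trans.
    { apply (meet_glb (qle_refl _) (qle_trans (hfun_dist g a1 a2) (Hq (g a1) (g a2)))). }
    apply meet_sup_le. intros s (b1 & b2 & H1 & H2 & ->).
    set (z1 := exist _ (a1, b1) (eq_sym H1) : vpb g e).
    set (z2 := exist _ (a2, b2) (eq_sym H2) : vpb g e).
    eapply qle_trans; [exact (hfun_dist w z1 z2)|].
    apply qsup_ub. exists (w z1), (w z2). rewrite !Hw1. auto.
Qed.

Lemma surj_coim A B (f : vhom A B) : surj (vcoim f).
Proof.
  intros [y [x Hx]]. exists x. apply sigP_eq. simpl. exact Hx.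
Qed.

Lemma quot_coim A B (f : vhom A B) : quot (vcoim f).
Proof.
  intros y1 y2. simpl. unfold dimg. apply qsup_least.
  intros v (x1 & x2 & H1 & H2 & ->). apply qsup_ub. exists x1, x2.
  split; [apply sigP_eq; exact H1|split; [apply sigP_eq; exact H2|reflexivity]].
Qed.

End Q.

Theorem proposition4p3 (V : quantale) :
  regular (VGrp V) /\ (integral V -> normal (VGrp V)).
Proof.
  split.
  - split; [|split].
    + split; [|split; [|split]].
      * exists (vunit V). intro X. exists (vterm X). intros h' x. simpl.
        destruct (h' x); reflexivity.
      * intros A B. exists (vprod A B), (vfst A B), (vsnd A B).
        intros Z u v. exists (vpair u v). simpl.
        split; [intro; reflexivity|split; [intro; reflexivity|]].
        intros w' H1 H2 z. cbv [VGrp heq comp vheq] in H1, H2; simpl in H1, H2. simpl. rewrite <- H1, <- H2.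
        apply surjective_pairing.
      * intros A B f g.
        assert (H0 : (fun x => f x = g x) gz) by (simpl; rewrite !hom_zero; reflexivity).
        assert (Hadd : forall x y, f x = g x -> f y = g y -> f (gadd x y) = g (gadd x y))
          by (intros x y H1 H2; rewrite !hfun_add, H1, H2; reflexivity).
        assert (Hopp : forall x, f x = g x -> f (gopp x) = g (gopp x))
          by (intros x H1; rewrite !hom_opp, H1; reflexivity).
        exists (vsub H0 Hadd Hopp), (vincl H0 Hadd Hopp). split.
        -- intros [x Hx]. exact Hx.
        -- intros Z u Hu. cbv [VGrp heq comp vheq] in Hu; simpl in Hu. exists (@vcorestr V A _ H0 Hadd Hopp Z u Hu). split.
           ++ intro; reflexivity.
           ++ intros w' Hw z. cbv [VGrp heq comp vheq] in Hw; simpl in Hw. apply sigP_eq. apply Hw.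
      * intros A B X f g. exists (vpb f g), (pb1 f g), (pb2 f g).
        apply vpb_is_pullback.
    + intros A B P f p1 p2 [Hc Hu].
      exists (vimg f), (vcoim f).
      apply coeq_of; [apply surj_coim | apply quot_coim | |].
      * intro k. apply sigP_eq. simpl. apply Hc.
      * intros Z u Hu' b b' Hbb'.
        assert (Hf : f b = f b') by exact (f_equal (@proj1_sig _ _) Hbb').
        destruct (Hu (vpb f f) (pb1 f f) (pb2 f f) (fun z => proj2_sig z)) as [w [Hw1 [Hw2 _]]].
        cbv [VGrp heq comp vheq] in Hw1, Hw2; simpl in Hw1, Hw2.
        set (z := exist _ (b, b') Hf : vpb f f).
        transitivity (u (p1 (w z))); [rewrite (Hw1 z); reflexivity|].
        rewrite Hu', (Hw2 z); reflexivity.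
    + intros A B X P g e p1 p2 [K [f1 [f2 Hcoeq]]] Hpb.
      destruct (regepi_char Hcoeq) as [Hs Hq].
      destruct (pullback_regepi Hs Hq Hpb) as [Hs1 Hq1].
      exists (vpb p1 p1), (pb1 p1 p1), (pb2 p1 p1).
      apply coeq_of; auto.
      * intros [[z z'] Hz]. exact Hz.
      * intros Z u Hu b b' Hbb'.
        exact (Hu (exist _ (b, b') Hbb')).
  - intros HI. exists (vunit V). split; [split|].
    + intro X. exists (vinit HI X). intros h' []. exact (hom_zero h').
    + intro X. exists (vterm X). intros h' x. simpl. destruct (h' x); reflexivity.
    + intros B Q e [A [f [g Hcoeq]]].
      destruct (regepi_char Hcoeq) as [Hs Hq].
      assert (H0 : (fun b => e b = gz) gz) by (simpl; apply hom_zero).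
      assert (Hadd : forall x y, e x = gz -> e y = gz -> e (gadd x y) = gz)
        by (intros x y H1 H2; rewrite hfun_add, H1, H2; apply gadd0l).
      assert (Hopp : forall x, e x = gz -> e (gopp x) = gz)
        by (intros x H1; rewrite hom_opp, H1, <- (gadd0l (gopp gz)); apply gaddNr).
      exists (vsub H0 Hadd Hopp), (vincl H0 Hadd Hopp), (vterm _), (vinit HI B).
      apply coeq_of; auto.
      * intros [k Hk]. simpl. rewrite Hk, hom_zero. reflexivity.
      * intros Z u Hu b b' Hbb'. cbv [VGrp heq comp vheq] in Hu; simpl in Hu.
        assert (Hk : e (gadd b (gopp b')) = gz)
          by (rewrite hfun_add, hom_opp, Hbb'; apply gaddNr).
        apply sub_eq0. rewrite <- hom_opp, <- hfun_add.
        pose proof (Hu (exist _ _ Hk)) as Hz; simpl in Hz. rewrite Hz. apply hom_zero.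
Qed.
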